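(* For all integers $n,m \geq 1$ with $n+m \geq 3$: ${\rm ML}^{\rm W}(K_{n,m})=0$ if $n \neq m$, and ${\rm ML}^{\rm W}(K_{n,m})=2n-2$ if $n=m \geq 2$.
   Context: $K_{n,m}$ is the complete bipartite graph with parts of sizes $n$ and $m$. A walk of a graph $G$ is a sequence of vertices $u_0u_1\dots u_p$ with $u_tu_{t+1}\in E(G)$ for all $t$ (vertices and edges may repeat); its length is $p$. For a walk $W$ of $G$, $G+W$ is the multigraph on $V(G)$ whose edge multiset consists of $E(G)$ together with each edge added as many times as $W$ traverses it. A multigraph is locally irregular if no two adjacent vertices have the same degree; a walk is irregularising if $G+W$ is locally irregular. ${\rm ML}^{\rm W}(G)$ denotes the minimum length of an irregularising walk of $G$, where the trivial walk consisting of a single vertex (length $0$) is allowed. *)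

(* Defs.v *)
From mathcomp Require Import all_boot.
Set Implicit Arguments. Unset Strict Implicit. Unset Printing Implicit Defensive.

Section Walks.
Variables (T : finType) (e : rel T).

Definition is_walk (w : seq T) : bool :=
  if w is x :: s then path e x s else false.

Definition walk_len (w : seq T) : nat := (size w).-1.

Definition walk_steps (w : seq T) : seq (T * T) := zip w (behead w).

Definition gdeg (v : T) : nat := #|[pred u | e v u]|.

(* degree of v in the multigraph G + W : each traversal of an edge incident
   to v adds one (an edge uv traversed at step t contributes to both ends) *)
Definition walk_deg (w : seq T) (v : T) : nat :=
  gdeg v + \sum_(st <- walk_steps w) ((st.1 == v) + (st.2 == v)).

(* G + W is locally irregular: adjacent vertices (adjacency of G+W is that of G)
   have different degrees *)
Definition irregularising (w : seq T) : bool :=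
  is_walk w && [forall u, forall v, e u v ==> (walk_deg w u != walk_deg w v)].

Definition MLW_is (k : nat) : Prop :=
  (exists w, irregularising w /\ walk_len w = k) /\
  (forall w, irregularising w -> k <= walk_len w).

End Walks.

Definition Kbip (n m : nat) : rel ('I_n + 'I_m)%type :=
  fun x y => match x, y with
             | inl _, inr _ => true
             | inr _, inl _ => true
             | _, _ => false
             end.
Arguments Kbip n m : clear implicits.

(* Main.v *)
Require Import Defs.
From mathcomp Require Import all_boot.
From mathcomp Require Import zify.
Set Implicit Arguments. Unset Strict Implicit.

Definition isl {n m : nat} (u : ('I_n + 'I_m)%type) : bool :=
  if u is inl _ then true else false.

Lemma card_isl n m : #|[pred u : ('I_n + 'I_m)%type | isl u]| = n.
Proof.
rewrite -sum1_card big_sumType /= [X in _ + X]big_pred0 // addn0.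
by rewrite (eq_bigl xpredT) // sum1_card card_ord.
Qed.

Lemma card_isr n m : #|[pred u : ('I_n + 'I_m)%type | ~~ isl u]| = m.
Proof.
rewrite -sum1_card big_sumType /= [X in X + _]big_pred0 // add0n.
by rewrite (eq_bigl xpredT) // sum1_card card_ord.
Qed.

Lemma gdeg_l n m i : gdeg (Kbip n m) (inl i) = m.
Proof. by rewrite /gdeg -[RHS](card_isr n m); apply: eq_card => -[]. Qed.

Lemma gdeg_r n m i : gdeg (Kbip n m) (inr i) = n.
Proof. by rewrite /gdeg -[RHS](card_isl n m); apply: eq_card => -[]. Qed.

Definition extra {T : finType} (w : seq T) v :=
  \sum_(st <- walk_steps w) ((st.1 == v) + (st.2 == v)).

Lemma extra_count (T : finType) (x : T) s v :
  extra (x :: s) v + (x == v) + (last x s == v) = 2 * count_mem v (x :: s).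
Proof.
elim: s x => [|y s IH] x.
  by rewrite /extra /walk_steps /= big_nil; lia.
have -> : extra (x :: y :: s) v = (x == v) + (y == v) + extra (y :: s) v.
  by rewrite /extra /walk_steps /= big_cons.
have := IH y. rewrite /= => H. lia.
Qed.

Lemma walk_deg_extra (T : finType) (e : rel T) w v :
  walk_deg e w v = gdeg e v + extra w v.
Proof. by []. Qed.

Lemma extra_notin (T : finType) (x : T) s v :
  v \notin (x :: s) -> extra (x :: s) v = 0.
Proof.
move=> /count_memPn H; have := @extra_count _ x s v; rewrite H; lia.
Qed.

Lemma alt_count n m (x : ('I_n + 'I_m)%type) s :
  path (Kbip n m) x s ->
  count isl (x :: s) <= count (predC isl) (x :: s) + isl x /\
  count (predC isl) (x :: s) <= count isl (x :: s) + ~~ isl x.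
Proof.
elim: s x => [|y s IH] x /=.
  by case: x.
move=> /andP [Hxy /IH]; rewrite /=.
by case: x Hxy => a; case: y => b //= _; lia.
Qed.

Lemma card_le_count (T : finType) (P : pred T) w :
  (forall v, P v -> v \in w) -> #|P| <= count P w.
Proof.
move=> H; rewrite -size_filter.
apply: leq_trans (card_size _).
apply: subset_leq_card; apply/subsetP => v Pv.
rewrite mem_filter; apply/andP; split; [exact: Pv | exact: H].
Qed.

Lemma count_split (T : eqType) (P : pred T) w :
  count P w + count (predC P) w = size w.
Proof. by rewrite count_predC. Qed.

Lemma lower n (w : seq ('I_n + 'I_n)%type) :
  irregularising (Kbip n n) w -> 2 * n - 2 <= walk_len w.
Proof.
case/andP; case: w => [|x s] //= Hp /forallP Hf.
have [H1 H2] := alt_count Hp.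
have Hs := count_split isl (x :: s).
rewrite /walk_len /=.
have [Hl | Hl] : (forall v, isl v -> v \in x :: s) \/
                 (forall v, ~~ isl v -> v \in x :: s).
  case: (boolP [forall v, isl v ==> (v \in x :: s)]) => [/forallP A|].
    by left => v Hv; apply: (implyP (A v)).
  move=> /forallPn [[i|j]] /= Hi //.
  right => -[j|j] //= _; apply/negPn/negP => Hj.
  have := implyP (forallP (Hf (inl i)) (inr j)) isT.
  by rewrite !walk_deg_extra !extra_notin // gdeg_l gdeg_r eqxx.
- have := card_le_count Hl; rewrite card_isl.
  move: H1 H2 Hs; rewrite /=; case: (isl x) => /=; move: (count isl s) (count (predC isl) s) (size s) => a b c; lia.
- have := card_le_count Hl.
  rewrite (_ : #|_| = n); last first.
    by rewrite -[RHS](card_isr n n); apply: eq_card.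
  move: H1 H2 Hs; rewrite /=; case: (isl x) => /=; move: (count isl s) (count (predC isl) s) (size s) => a b c; lia.
Qed.
Section Constr.
Variables (n : nat) (a b : 'I_n).
Hypothesis Hab : a != b.
Hypothesis Hn : 1 < n.
Local Notation T := ('I_n + 'I_n)%type.
Definition r0 : T := inr a.
Definition mid (s : seq 'I_n) : seq T := flatten [seq [:: inl i; r0] | i <- s].
Definition sl : seq 'I_n := enum [pred i | (i != a) && (i != b)].
Definition wk : seq T := inl a :: r0 :: mid sl ++ [:: inl b].

Lemma mid_path s : path (Kbip n n) r0 (mid s) /\ last r0 (mid s) = r0.
Proof. by elim: s => [|i s [IH1 IH2]] //=. Qed.

Lemma mid_count_l s j : count_mem (inl j) (mid s) = count_mem j s.
Proof. by elim: s => [|i s IH] //=; rewrite IH. Qed.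

Lemma mid_count_r s k : count_mem (inr k) (mid s) = (a == k) * size s.
Proof. elim: s => [|i s IH] //=; first by rewrite muln0.
by rewrite IH /r0 /= mulnS add0n. Qed.

Lemma mid_size s : size (mid s) = 2 * size s.
Proof. elim: s => [|i s IH] //=; rewrite IH; lia. Qed.

Lemma sl_size : size sl = n - 2.
Proof.
rewrite /sl -cardE.
have := cardC (pred2 a b); rewrite card2 Hab card_ord => E; rewrite -[in RHS]E.
rewrite addKn; apply: eq_card => i /=.
by rewrite !inE negb_or.
Qed.

Lemma sl_mem j : (j \in sl) = (j != a) && (j != b).
Proof. by rewrite /sl mem_enum inE. Qed.

Lemma sl_count j : count_mem j sl = (j != a) && (j != b).
Proof. by rewrite count_uniq_mem ?enum_uniq // sl_mem. Qed.

Lemma wk_walk : is_walk (Kbip n n) wk.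
Proof.
rewrite /wk /= cat_path; have [-> ->] := mid_path sl; by [].
Qed.

Lemma wk_len : walk_len wk = 2 * n - 2.
Proof.
rewrite /walk_len /wk /= size_cat mid_size sl_size /=; lia.
Qed.

Lemma wk_last : last (inl a) (r0 :: mid sl ++ [:: inl b]) = inl b.
Proof. by rewrite /= last_cat. Qed.

Lemma wk_extra_l i : extra wk (inl i) = 2 - (a == i) - (b == i).
Proof.
have := extra_count (inl a) (r0 :: mid sl ++ [:: inl b]) (inl i).
rewrite wk_last -/wk.
have -> : count_mem (inl i) wk = (a == i) + (i != a) && (i != b) + (b == i).
  rewrite /wk /= count_cat /= mid_count_l sl_count addn0 add0n addnA.
  by [].
have -> : (inl a == inl i :> T) = (a == i) by [].
have -> : (inl b == inl i :> T) = (b == i) by [].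
rewrite (eq_sym i a) (eq_sym i b).
case: (eqVneq a i) => [Eai|Hai]; first subst i.
  rewrite eq_sym (negbTE Hab) /=; move: (extra wk _) => x; lia.
rewrite /=; move: (extra wk _) => x; case: (b == i) => /=; lia.
Qed.

Lemma wk_extra_r k : extra wk (inr k) = (a == k) * (2 * (n - 1)).
Proof.
have := extra_count (inl a) (r0 :: mid sl ++ [:: inl b]) (inr k).
rewrite wk_last -/wk.
have -> : count_mem (inr k) wk = (a == k) * (n - 1).
  rewrite /wk /= count_cat /= mid_count_r sl_size addn0 add0n.
  have -> : (inr a == inr k :> T) = (a == k) by [].
  by case: (a == k); rewrite ?mul1n ?mul0n //; lia.
have -> : (inl a == inr k :> T) = false by [].
have -> : (inl b == inr k :> T) = false by [].
move: (extra wk _) => x; lia.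
Qed.

Lemma wk_irr : val a = 0 -> val b = n.-1 -> irregularising (Kbip n n) wk.
Proof.
move=> Ha Hb.
rewrite /irregularising wk_walk /=; apply/forallP => u; apply/forallP => v.
apply/implyP.
have key : forall i k : 'I_n, (n + (2 - (a == i) - (b == i)) == n + (a == k) * (2 * (n - 1))) = false.
  move=> i k; apply/negbTE/eqP.
  have Hi := ltn_ord i.
  case: (eqVneq a i) => [Eai|Hai]; first subst i.
    rewrite eq_sym (negbTE Hab) /=; move: (a == k) => c; case: c; lia.
  case: (eqVneq b i) => [Ebi|Hbi]; first subst i.
    move: (a == k) => c; case: c; lia.
  have H1 : val a != val i by [].
  have H2 : val b != val i by [].
  move: (a == k) H1 H2 => c; rewrite Ha Hb; case: c => /=; lia.
case: u => i; case: v => k //= _; rewrite !walk_deg_extra gdeg_l gdeg_r wk_extra_l wk_extra_r.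
  by rewrite key.
by rewrite eq_sym key.
Qed.
End Constr.


Theorem theorem5p2 (n m : nat) :
  1 <= n -> 1 <= m -> 3 <= n + m ->
  (n != m -> MLW_is (Kbip n m) 0) /\
  (n = m -> 2 <= n -> MLW_is (Kbip n m) (2 * n - 2)).
Proof.
move=> Hn Hm _; split.
  move=> Hnm; split => [|w _]; last by [].
  exists [:: inl (Ordinal Hn)]; split => //.
  rewrite /irregularising /=; apply/forallP => u; apply/forallP => v.
  apply/implyP.
  have E : forall z, walk_deg (Kbip n m) [:: inl (Ordinal Hn)] z = gdeg (Kbip n m) z.
    by move=> z; rewrite walk_deg_extra /extra /walk_steps /= big_nil addn0.
  case: u => i; case: v => k //= _; rewrite !E gdeg_l gdeg_r //.
  by rewrite eq_sym.
move=> Enm Hn2; subst m; split; last first.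
  by move=> w /lower.
have Hb : n.-1 < n by lia.
pose a := Ordinal Hn; pose b := Ordinal Hb.
have Hab : a != b by rewrite /a /b; apply/eqP => -[]; lia.
have Hn1 : 1 < n by [].
exists (wk a b); split.
  by apply: wk_irr.
exact: wk_len.
Qed.
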